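(* Let $\mathbf A\in\mathbb R^{2\times2}_{\rm sym}$ be positive definite with eigenvalues $a_1,a_2$, let $\delta:=\frac12\sqrt{\operatorname{tr}^2\log\mathbf A-4\det\log\mathbf A}=\frac12|\log a_1-\log a_2|$, and let $\theta(x):=\frac2{\sinh(2x)}-\frac1x$ for $x\ne0$, with $\frac{\theta(\delta)}{\delta}$ understood as $\lim_{x\to0}\frac{\theta(x)}x=-\frac23$ when $\delta=0$. Then for all $\mathbf X\in\mathbb R^{2\times2}$, writing $\mathbf L=\log\mathbf A$ and $\mathbf Z:=\mathbf L^2\mathbf X-2\mathbf L\mathbf X\mathbf L+\mathbf X\mathbf L^2$, $\lim_{s\to0}\frac{\log(\mathbf A+s\mathbf X)-\log\mathbf A}{s}=\frac12(\mathbf A^{-1}\mathbf X+\mathbf X\mathbf A^{-1})+\frac{\theta(\delta)}{8\delta}\big(\mathbf A^{-1}\mathbf Z+\mathbf Z\mathbf A^{-1}\big),$ where $\frac{d\log\mathbf A}{d\mathbf A}\mathbf X$ on the left is the Fréchet derivative of the matrix logarithm (extended linearly to nonsymmetric directions via the Daleckiĭ–Kreĭn formula).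
   Context: $\log\mathbf A$ denotes the spectrally defined matrix logarithm of a symmetric positive definite matrix. For non-symmetric $\mathbf X$, the left-hand side is to be understood as $\frac{d\log\mathbf A}{d\mathbf A}\mathbf X:=\mathbf Q\big([F(a_i,a_j)]\odot(\mathbf Q^{\mathsf T}\mathbf X\mathbf Q)\big)\mathbf Q^{\mathsf T}$ where $\mathbf A=\mathbf Q\operatorname{diag}(a_1,a_2)\mathbf Q^{\mathsf T}$, $\odot$ is the entrywise product, $F(x,y)=\frac{\log x-\log y}{x-y}$ for $x\ne y$ and $F(x,x)=1/x$. *)

(* Defs.v *)
From HB Require Import structures.
From mathcomp Require Import all_boot all_order all_algebra.
From mathcomp Require Import all_classical all_reals all_analysis.
Set Implicit Arguments. Unset Strict Implicit. Unset Printing Implicit Defensive.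
Import Order.TTheory GRing.Theory Num.Theory.
Import numFieldNormedType.Exports.
Local Open Scope ring_scope.

Section Defs.
Variable R : realType.

Definition spd (A : 'M[R]_2) : Prop :=
  A^T = A /\ forall v : 'cV[R]_2, v != 0 -> 0 < (v^T *m A *m v) 0 0.

Definition is_orth (Q : 'M[R]_2) : Prop := Q^T *m Q = 1%:M.

(* spectrally defined matrix logarithm: for M = Q diag(d) Q^T with Q
   orthogonal, log M := Q diag(ln d) Q^T (a chosen decomposition; the value
   is independent of the choice when M is SPD). Junk value 0 if M has no
   orthogonal diagonalisation. *)
Definition mxlog (M : 'M[R]_2) : 'M[R]_2 :=
  match pselect (exists Qd : 'M[R]_2 * 'rV[R]_2,
                   is_orth Qd.1 /\ M = Qd.1 *m diag_mx Qd.2 *m Qd.1^T) with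
  | left h => let Qd := projT1 (cid h) in
              Qd.1 *m diag_mx (map_mx (@ln R) Qd.2) *m Qd.1^T
  | right _ => 0
  end.

Definition Flog (x y : R) : R :=
  if x == y then x^-1 else (ln x - ln y) / (x - y).

Definition DKlog (Q : 'M[R]_2) (a : 'rV[R]_2) (X : 'M[R]_2) : 'M[R]_2 :=
  Q *m (\matrix_(i, j) (Flog (a 0 i) (a 0 j) * (Q^T *m X *m Q) i j)) *m Q^T.

Definition sinh (x : R) : R := (expR x - expR (- x)) / 2.

Definition theta (x : R) : R := 2 / sinh (2 * x) - x^-1.

Definition theta_over (x : R) : R :=
  if x == 0 then - (2 / 3) else theta x / x.

Definition delta_of (A : 'M[R]_2) : R :=
  let L := mxlog A in 2^-1 * Num.sqrt (\tr L ^+ 2 - 4 * \det L).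

Definition Zmat (A X : 'M[R]_2) : 'M[R]_2 :=
  let L := mxlog A in L *m L *m X - 2 *: (L *m X *m L) + X *m L *m L.

Definition rhs (A X : 'M[R]_2) : 'M[R]_2 :=
  let Ai := invmx A in let Z := Zmat A X in
  2^-1 *: (Ai *m X + X *m Ai)
  + (theta_over (delta_of A) / 8) *: (Ai *m Z + Z *m Ai).

End Defs.

(* Main.v *)
Require Import Defs.
From HB Require Import structures.
From mathcomp Require Import all_boot all_order all_algebra.
From mathcomp Require Import all_classical all_reals all_analysis.
From mathcomp Require Import ring lra.
Import Order.TTheory GRing.Theory Num.Theory.
Import numFieldNormedType.Exports.
Local Open Scope classical_set_scope.
Local Open Scope ring_scope.
Notation i0 := (@ord0 1).
Notation i1 := (@ord_max 1).
Section Main.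
Variable R : realType.
Implicit Types (x y : R) (A B M Q : 'M[R]_2) (d : 'rV[R]_2).

Lemma Flog_sym x y : Flog x y = Flog y x.
Proof.
rewrite /Flog eq_sym; case: eqP => [->//|/eqP ne].
by rewrite -mulrNN !opprB -invrN opprB.
Qed.

Lemma Flog_mul x y : (x - y) * Flog x y = ln x - ln y.
Proof.
rewrite /Flog; case: eqP => [->|/eqP ne]; first by rewrite !subrr mul0r.
by rewrite mulrC -mulrA mulVf ?mulr1 // subr_eq0.
Qed.

Lemma ln_le_sub1 x : 0 < x -> ln x <= x - 1.
Proof.
move=> x0; have := expR_ge1Dx (ln x); rewrite lnK ?posrE // => h; lra.
Qed.

Lemma Flog_between x y : 0 < x -> 0 < y ->
  (Flog x y - x^-1) * (Flog x y - y^-1) <= 0.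
Proof.
move=> x0 y0; case: (eqVneq x y) => [<-|ne].
  by rewrite /Flog eqxx subrr mul0r.
set F := Flog x y.
have hF : (x - y) * F = ln x - ln y by rewrite Flog_mul.
have h1 : ln x - ln y <= x / y - 1.
  by rewrite -ln_div ?posrE // ln_le_sub1 // divr_gt0.
have h2 : ln y - ln x <= y / x - 1.
  by rewrite -ln_div ?posrE // ln_le_sub1 // divr_gt0.
have ex : (F - x^-1) * x = F * x - 1 by rewrite mulrBl mulVf ?gt_eqF.
have ey : (F - y^-1) * y = F * y - 1 by rewrite mulrBl mulVf ?gt_eqF.
have ex' : x / y * y = x by rewrite -mulrA mulVf ?gt_eqF ?mulr1.
have ey' : y / x * x = y by rewrite -mulrA mulVf ?gt_eqF ?mulr1.
have k1 : 0 <= (F * x - 1) * (x - y).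
  have := ler_wpM2r (ltW x0) h2; rewrite [X in _ <= X]mulrBl ey' mul1r => h.
  have -> : (F * x - 1) * (x - y) = (x - y) * F * x - (x - y) by ring.
  rewrite hF; lra.
have k2 : (F * y - 1) * (x - y) <= 0.
  have := ler_wpM2r (ltW y0) h1; rewrite [X in _ <= X]mulrBl ex' mul1r => h.
  have -> : (F * y - 1) * (x - y) = (x - y) * F * y - (x - y) by ring.
  rewrite hF; lra.
have pos : 0 < x * y * (x - y) ^+ 2.
  apply: mulr_gt0; first exact: mulr_gt0.
  by rewrite exprn_even_gt0 // subr_eq0.
have : (F - x^-1) * (F - y^-1) * (x * y * (x - y) ^+ 2)
   = ((F * x - 1) * (x - y)) * ((F * y - 1) * (x - y)).
  by rewrite -ex -ey; ring.
move=> e; rewrite -(pmulr_lle0 _ pos) e.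
by apply: mulr_ge0_le0.
Qed.

Lemma between_bounds (a b z : R) : (z - a) * (z - b) <= 0 ->
  (a + b - `|a - b|) / 2 <= z <= (a + b + `|a - b|) / 2.
Proof.
move=> h; case: (lerP a b) => ab.
  apply/andP; split; nra.
apply/andP; split; nra.
Qed.

Lemma ln_cvg {T} {F : set_system T} {FF : Filter F} {u : T -> R} {x} :
  0 < x -> u t @[t --> F] --> x -> ln (u t) @[t --> F] --> ln x.
Proof. by move=> x0 hu; apply: cvg_comp hu (continuous_ln x0). Qed.

Lemma Flog_cvg {T} {F : set_system T} {FF : Filter F} {u v : T -> R} {x y} :
  0 < x -> 0 < y -> u t @[t --> F] --> x -> v t @[t --> F] --> y ->
  Flog (u t) (v t) @[t --> F] --> Flog x y.
Proof.
move=> x0 y0 hu hv; case: (eqVneq x y) => [exy|ne].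
  subst y.
  have hux := @cvgr_gt R _ _ _ u x hu 0 x0.
  have hvx := @cvgr_gt R _ _ _ v x hv 0 x0.
  have hui : (u t)^-1 @[t --> F] --> x^-1 by apply: cvgV; rewrite ?gt_eqF.
  have hvi : (v t)^-1 @[t --> F] --> x^-1 by apply: cvgV; rewrite ?gt_eqF.
  have hd : `|(u t)^-1 - (v t)^-1| @[t --> F] --> `|x^-1 - x^-1|.
    by apply: cvg_norm; apply: cvgB.
  rewrite subrr normr0 in hd.
  have Fx : Flog x x = x^-1 by rewrite /Flog eqxx.
  rewrite Fx.
  apply: (@squeeze_cvgr _ _ _ _
     (fun t => ((u t)^-1 + (v t)^-1 - `|(u t)^-1 - (v t)^-1|) / 2)
     (fun t => ((u t)^-1 + (v t)^-1 + `|(u t)^-1 - (v t)^-1|) / 2)).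
  - near=> t; apply: between_bounds; apply: Flog_between.
      by near: t; exact: hux.
    by near: t; exact: hvx.
  - have -> : x^-1 = (x^-1 + x^-1 - 0) / 2 by lra.
    by apply: cvgMl; apply: cvgB => //; apply: cvgD.
  - have -> : x^-1 = (x^-1 + x^-1 + 0) / 2 by lra.
    by apply: cvgMl; apply: cvgD => //; apply: cvgD.
have hd : `|u t - v t| @[t --> F] --> `|x - y|.
  by apply: cvg_norm; apply: cvgB.
have H : 0 < `|x - y| by rewrite normr_gt0 subr_eq0.
have h2 := @cvgr_gt R _ _ _ _ _ hd 0 H.
apply: cvg_trans; first apply: (near_eq_cvg (f := fun t => (ln (u t) - ln (v t)) / (u t - v t))).
  near=> t.
  have : 0 < `|u t - v t| by near: t; exact: h2.
  rewrite normr_gt0 subr_eq0 => hn.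
  by rewrite /Flog (negbTE hn).
rewrite /Flog (negbTE ne).
apply: cvgM; first by apply: cvgB; apply: ln_cvg.
by apply: cvgV; [rewrite subr_eq0 | apply: cvgB].
Unshelve. all: by end_near.
Qed.


Lemma ord2_cases (i : 'I_2) : i = i0 \/ i = i1.
Proof. by case: i => [[|[|k]] Hi]; [left|right|]; try apply: val_inj. Qed.

Lemma mx2_eq A B : A i0 i0 = B i0 i0 -> A i0 i1 = B i0 i1 ->
  A i1 i0 = B i1 i0 -> A i1 i1 = B i1 i1 -> A = B.
Proof.
move=> h00 h01 h10 h11; apply/matrixP => i j.
by case: (ord2_cases i) => ->; case: (ord2_cases j) => ->.
Qed.

Lemma mx2_mul A B i j : (A *m B) i j = A i i0 * B i0 j + A i i1 * B i1 j.
Proof.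
rewrite mxE !big_ord_recl big_ord0 addr0 /=.
by have -> : lift i0 (@ord0 0) = i1 by apply: val_inj.
Qed.

Lemma diag00 d : diag_mx d i0 i0 = d 0 i0. Proof. by rewrite mxE eqxx mulr1n. Qed.
Lemma diag11 d : diag_mx d i1 i1 = d 0 i1. Proof. by rewrite mxE eqxx mulr1n. Qed.
Lemma diag01 d : diag_mx d i0 i1 = 0. Proof. by rewrite mxE. Qed.
Lemma diag10 d : diag_mx d i1 i0 = 0. Proof. by rewrite mxE. Qed.

Lemma conj_entry Q B i j : (Q *m B *m Q^T) i j =
  (Q i i0 * B i0 i0 + Q i i1 * B i1 i0) * Q j i0 +
  (Q i i0 * B i0 i1 + Q i i1 * B i1 i1) * Q j i1.
Proof. by rewrite mx2_mul !mx2_mul !mxE. Qed.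

Lemma conj_diag Q d i j : (Q *m diag_mx d *m Q^T) i j =
  Q i i0 * d 0 i0 * Q j i0 + Q i i1 * d 0 i1 * Q j i1.
Proof. rewrite conj_entry diag00 diag11 diag01 diag10; ring. Qed.

Lemma orthT {Q} : is_orth Q -> Q *m Q^T = 1%:M.
Proof. by move=> h; apply: mulmx1C. Qed.

Lemma tr_conj {Q} d : is_orth Q -> \tr (Q *m diag_mx d *m Q^T) = d 0 i0 + d 0 i1.
Proof.
move=> h; rewrite mxtrace_mulC mulmxA h mul1mx mxtrace_diag.
rewrite !big_ord_recl big_ord0 addr0 /=.
by have -> : lift i0 (@ord0 0) = i1 by apply: val_inj.
Qed.

Lemma det_conj {Q} d : is_orth Q -> \det (Q *m diag_mx d *m Q^T) = d 0 i0 * d 0 i1.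
Proof.
move=> h; rewrite !det_mulmx det_tr det_diag mulrAC -{1}(det_tr Q) -det_mulmx.
rewrite (h : Q^T *m Q = 1%:M) det1 mul1r !big_ord_recl big_ord0 mulr1 /=.
by have -> : lift i0 (@ord0 0) = i1 by apply: val_inj.
Qed.

Definition G M (x y : R) : 'M[R]_2 :=
  ((ln x + ln y) / 2) *: 1%:M + Flog x y *: (M - ((x + y) / 2) *: 1%:M).

Lemma G_sym M x y : G M x y = G M y x.
Proof. by rewrite /G Flog_sym (addrC (ln x)) (addrC x). Qed.

Lemma conj_interp {Q d M} : is_orth Q -> M = Q *m diag_mx d *m Q^T ->
  Q *m diag_mx (map_mx (@ln R) d) *m Q^T = G M (d 0 i0) (d 0 i1).
Proof.
move=> hQ eM; have QT := orthT hQ.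
set a := (ln (d 0 i0) + ln (d 0 i1)) / 2.
set b := Flog (d 0 i0) (d 0 i1).
set g := (d 0 i0 + d 0 i1) / 2.
have -> : G M (d 0 i0) (d 0 i1) =
   Q *m (a *: 1%:M + b *: (diag_mx d - g *: 1%:M)) *m Q^T.
  rewrite /G eM -/a -/b -/g mulmxDr mulmxDl -!scalemxAr -!scalemxAl.
  by rewrite mulmxBr mulmxBl -!scalemxAr -!scalemxAl !mulmx1 QT.
congr (_ *m _ *m _).
have hm := Flog_mul (d 0 i0) (d 0 i1).
rewrite -/b in hm.
apply: mx2_eq; rewrite !mxE /= ?eqxx /= ?mulr1n ?mulr0n ?mulr1 ?mulr0 ?subr0 ?mulr0 ?addr0 //.
- have ee : b * (d 0 i0 - (d 0 i0 + d 0 i1) / 2) = (d 0 i0 - d 0 i1) * b / 2 by field.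
  rewrite /a /g ee hm; by field.
- have ee : b * (d 0 i1 - g) = - ((d 0 i0 - d 0 i1) * b / 2) by rewrite /g; field.
  rewrite /a ee hm; by field.
Qed.

Lemma mxlog_dec {Q d M} : is_orth Q -> M = Q *m diag_mx d *m Q^T ->
  mxlog M = Q *m diag_mx (map_mx (@ln R) d) *m Q^T.
Proof.
move=> hQ eM; rewrite /mxlog; case: pselect => [h|nh]; last first.
  by exfalso; apply: nh; exists (Q, d).
case: (cid h) => [[Q' d'] /= [hQ' eM']].
rewrite (conj_interp hQ eM) (conj_interp hQ' eM').
have s : d' 0 i0 + d' 0 i1 = d 0 i0 + d 0 i1.
  by rewrite -(tr_conj d hQ) -(tr_conj d' hQ') -eM -eM'.
have p : d' 0 i0 * d' 0 i1 = d 0 i0 * d 0 i1.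
  by rewrite -(det_conj d hQ) -(det_conj d' hQ') -eM -eM'.
have : (d' 0 i0 - d 0 i0) * (d' 0 i0 - d 0 i1) = 0.
  have -> : (d' 0 i0 - d 0 i0) * (d' 0 i0 - d 0 i1)
     = d' 0 i0 ^+ 2 - d' 0 i0 * (d 0 i0 + d 0 i1) + d 0 i0 * d 0 i1 by ring.
  rewrite -s -p; ring.
move/eqP; rewrite mulf_eq0 !subr_eq0 => /orP[] /eqP e0.
  have e1 : d' 0 i1 = d 0 i1 by lra.
  by rewrite e0 e1.
have e1 : d' 0 i1 = d 0 i0 by lra.
by rewrite e0 e1 G_sym.
Qed.
Definition mk2 (a b c e : R) : 'M[R]_2 :=
  \matrix_(i, j) if i == i0 then (if j == i0 then a else b)
                 else (if j == i0 then c else e).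
Definition rv2 (a b : R) : 'rV[R]_2 := \row_j (if j == i0 then a else b).

Lemma mk2_00 a b c e : mk2 a b c e i0 i0 = a. Proof. by rewrite mxE. Qed.
Lemma mk2_01 a b c e : mk2 a b c e i0 i1 = b. Proof. by rewrite mxE. Qed.
Lemma mk2_10 a b c e : mk2 a b c e i1 i0 = c. Proof. by rewrite mxE. Qed.
Lemma mk2_11 a b c e : mk2 a b c e i1 i1 = e. Proof. by rewrite mxE. Qed.
Lemma rv2_0 a b : rv2 a b 0 i0 = a. Proof. by rewrite mxE. Qed.
Lemma rv2_1 a b : rv2 a b 0 i1 = b. Proof. by rewrite mxE. Qed.
Definition mk2E := (mk2_00, mk2_01, mk2_10, mk2_11, rv2_0, rv2_1).

Lemma id00 : (1%:M : 'M[R]_2) i0 i0 = 1. Proof. by rewrite mxE. Qed.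
Lemma id01 : (1%:M : 'M[R]_2) i0 i1 = 0. Proof. by rewrite mxE. Qed.
Lemma id10 : (1%:M : 'M[R]_2) i1 i0 = 0. Proof. by rewrite mxE. Qed.
Lemma id11 : (1%:M : 'M[R]_2) i1 i1 = 1. Proof. by rewrite mxE. Qed.
Definition idE := (id00, id01, id10, id11).

Lemma orth_rot co si : co ^+ 2 + si ^+ 2 = 1 -> is_orth (mk2 co (- si) si co).
Proof.
move=> h; rewrite /is_orth; apply: mx2_eq;
  rewrite mx2_mul ?idE ![(_^T) _ _]mxE ?mk2E; nra.
Qed.

Lemma spectral2 {M} : M i0 i1 = M i1 i0 ->
  exists Q d, is_orth Q /\ M = Q *m diag_mx d *m Q^T /\
    d 0 i0 = (M i0 i0 + M i1 i1) / 2 +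
       Num.sqrt (((M i0 i0 - M i1 i1) / 2) ^+ 2 + M i0 i1 ^+ 2) /\
    d 0 i1 = (M i0 i0 + M i1 i1) / 2 -
       Num.sqrt (((M i0 i0 - M i1 i1) / 2) ^+ 2 + M i0 i1 ^+ 2).
Proof.
move=> sym.
set c := (M i0 i0 + M i1 i1) / 2.
set p := (M i0 i0 - M i1 i1) / 2.
set q := M i0 i1.
set r := Num.sqrt (p ^+ 2 + q ^+ 2).
have r0 : 0 <= r by apply: sqrtr_ge0.
have hr : r ^+ 2 = p ^+ 2 + q ^+ 2 by rewrite sqr_sqrtr // addr_ge0 // sqr_ge0.
have m00 : M i0 i0 = c + p by rewrite /c /p; field.
have m11 : M i1 i1 = c - p by rewrite /c /p; field.
have rp : - r <= p <= r.
  have : p ^+ 2 <= r ^+ 2 by rewrite hr lerDl sqr_ge0.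
  move=> h; apply/andP; split; nra.
case: (ltrP 0 (r + p)) => up.
  have rpos : 0 < r by case/andP: rp => ? ?; lra.
  have n2pos : 0 <= 2 * r * (r + p) by rewrite mulr_ge0 // ?mulr_ge0 // ltW.
  set u := r + p.
  set n := Num.sqrt (2 * r * u).
  have hn : n ^+ 2 = 2 * r * u by rewrite sqr_sqrtr.
  have npos : 0 < n by rewrite sqrtr_gt0 mulr_gt0 ?mulr_gt0.
  have hq : q ^+ 2 = r ^+ 2 - p ^+ 2 by rewrite hr; ring.
  have f1 : (u / n) ^+ 2 + (q / n) ^+ 2 = 1.
    rewrite !expr_div_n hq -mulrDl hn /u.
    by field; rewrite ?gt_eqF ?mulr_gt0.
  have f2 : r * ((u / n) ^+ 2 - (q / n) ^+ 2) = p.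
    rewrite !expr_div_n hq -mulrBl hn /u.
    by field; rewrite ?gt_eqF ?mulr_gt0.
  have f3 : 2 * r * (u / n) * (q / n) = q.
    have e3 : (u / n) * (q / n) = u * q / n ^+ 2 by rewrite expr2 mulf_div.
    rewrite -mulrA e3 hn /u.
    by field; rewrite ?gt_eqF ?mulr_gt0.
  exists (mk2 (u / n) (- (q / n)) (q / n) (u / n)), (rv2 (c + r) (c - r)).
  split; first exact: orth_rot.
  split; last by rewrite !mk2E.
  move: f1 f2 f3; set co := u / n; set si := q / n => f1 f2 f3.
  apply/esym; apply: mx2_eq; rewrite conj_diag !mk2E ?m00 ?m11 -?sym -/q.
  - apply: (@eq_trans _ _ (c * (co ^+ 2 + si ^+ 2) + r * (co ^+ 2 - si ^+ 2))).
      by ring.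
    by rewrite f1 f2 mulr1.
  - by apply: (@eq_trans _ _ (2 * r * co * si)); [ring | rewrite f3].
  - by apply: (@eq_trans _ _ (2 * r * co * si)); [ring | rewrite f3].
  - apply: (@eq_trans _ _ (c * (co ^+ 2 + si ^+ 2) - r * (co ^+ 2 - si ^+ 2))).
      by ring.
    by rewrite f1 f2 mulr1.
have u0 : r + p = 0 by case/andP: rp => ? ?; lra.
have q0 : q = 0.
  have hq : q ^+ 2 = r ^+ 2 - p ^+ 2 by rewrite hr; ring.
  have pr : p = - r by lra.
  by move: hq; rewrite pr sqrrN subrr => /eqP; rewrite sqrf_eq0 => /eqP.
exists (mk2 0 (- 1) 1 0), (rv2 (c + r) (c - r)).
split; first by apply: orth_rot; rewrite expr0n /= expr1n add0r.
split; last by rewrite !mk2E.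
apply/esym; apply: mx2_eq; rewrite conj_diag !mk2E ?m00 ?m11 -?sym -/q ?q0; lra.
Qed.
Lemma Flog_theta x y : 0 < x -> 0 < y ->
  Flog x y = 2^-1 * (x^-1 + y^-1) +
    theta_over (2^-1 * `|ln x - ln y|) / 8 * ((x^-1 + y^-1) * (ln x - ln y) ^+ 2).
Proof.
move=> x0 y0; case: (eqVneq x y) => [<-|ne].
  rewrite /Flog eqxx subrr expr0n /= !mulr0 addr0; lra.
set t := ln x - ln y.
have tne : t != 0.
  apply/negP => /eqP/eqP; rewrite subr_eq0 => /eqP/ln_inj.
  by rewrite !posrE => /(_ x0 y0) e; rewrite e eqxx in ne.
have ext : expR t = x / y by rewrite expRB !lnK.
have ent : expR (- t) = y / x by rewrite expRN ext invf_div.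
have xy : x - y != 0 by rewrite subr_eq0.
have x0' : x != 0 by rewrite gt_eqF.
have y0' : y != 0 by rewrite gt_eqF.
rewrite /Flog (negbTE ne) -/t /theta_over.
have dne : 2^-1 * `|t| != 0 by rewrite mulf_eq0 invr_eq0 normr_eq0 negb_or tne andbT.
rewrite (negbTE dne) /theta /sinh.
have -> : 2 * (2^-1 * `|t|) = `|t| by lra.
have hxy2 : x * x + - y * y != 0.
  have -> : x * x + - y * y = (x - y) * (x + y) by ring.
  by rewrite mulf_neq0 // gt_eqF // addr_gt0.
have [tp|tn] := ltrP 0 t.
  rewrite gtr0_norm // ext ent.
  by field; rewrite x0' y0' tne xy hxy2.
rewrite ler0_norm // opprK ext ent.
have hyx2 : y * y + - x * x != 0.
  have -> : y * y + - x * x = - (x * x + - y * y) by ring.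
  by rewrite oppr_eq0.
by field; rewrite x0' y0' tne xy hyx2.
Qed.
Lemma mxg_mul m n (A : 'M[R]_(m, 2)) (B : 'M[R]_(2, n)) i j :
  (A *m B) i j = A i i0 * B i0 j + A i i1 * B i1 j.
Proof.
rewrite mxE !big_ord_recl big_ord0 addr0 /=.
by have -> : lift i0 (@ord0 0) = i1 by apply: val_inj.
Qed.

Lemma spd_eig {A Q a} : spd A -> is_orth Q -> A = Q *m diag_mx a *m Q^T ->
  0 < a 0 i0 /\ 0 < a 0 i1.
Proof.
move=> [_ hA] hQ eA.
have key (k : 'I_2) : 0 < a 0 k.
  set e : 'cV[R]_2 := delta_mx k 0.
  have ne : Q *m e != 0.
    apply/negP => /eqP h0.
    have : Q^T *m (Q *m e) = e by rewrite mulmxA (hQ : Q^T *m Q = 1%:M) mul1mx.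
    rewrite h0 mulmx0 => /(congr1 (fun M : 'cV[R]_2 => M k 0)).
    by rewrite !mxE !eqxx /= => /esym/eqP; rewrite oner_eq0.
  have := hA _ ne.
  have -> : (Q *m e)^T *m A *m (Q *m e) = e^T *m diag_mx a *m e.
    rewrite trmx_mul eA !mulmxA -(mulmxA _ Q^T Q) (hQ : Q^T *m Q = 1%:M) mulmx1.
    by rewrite -(mulmxA _ Q^T Q) (hQ : Q^T *m Q = 1%:M) mulmx1.
  rewrite mul_mx_diag !mxE.
  rewrite (bigD1 k) //= big1 ?addr0.
    by rewrite !mxE !eqxx /= mul1r mulr1.
  by move=> j /negbTE jk; rewrite !mxE jk /= ?mul0r ?mulr0.
by split; apply: key.
Qed.
Lemma lift00 : lift i0 (@ord0 0) = i1. Proof. by apply: val_inj. Qed.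

Lemma part1 A X Q a : spd A -> is_orth Q -> A = Q *m diag_mx a *m Q^T ->
  DKlog Q a X = rhs A X.
Proof.
move=> hA hQ eA.
have [a0 a1] := spd_eig hA hQ eA.
have QT := orthT hQ.
have TQ : Q^T *m Q = 1%:M := hQ.
have cjM B C : Q *m B *m Q^T *m (Q *m C *m Q^T) = Q *m (B *m C) *m Q^T.
  by rewrite !mulmxA -(mulmxA _ Q^T Q) TQ mulmx1.
have cjD B C : Q *m B *m Q^T + Q *m C *m Q^T = Q *m (B + C) *m Q^T.
  by rewrite mulmxDr mulmxDl.
have cjB B C : Q *m B *m Q^T - Q *m C *m Q^T = Q *m (B - C) *m Q^T.
  by rewrite mulmxBr mulmxBl.
have cjZ (k : R) B : k *: (Q *m B *m Q^T) = Q *m (k *: B) *m Q^T.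
  by rewrite scalemxAl scalemxAr.
set Dl := diag_mx (map_mx (@ln R) a).
set Dai := diag_mx (map_mx (fun x : R => x^-1) a).
have hL : mxlog A = Q *m Dl *m Q^T := mxlog_dec hQ eA.
have hAi : invmx A = Q *m Dai *m Q^T.
  have h1 : A *m (Q *m Dai *m Q^T) = 1%:M.
    have hd : diag_mx a *m Dai = 1%:M.
      apply: mx2_eq; rewrite mul_diag_mx !mxE /= ?mulr0 ?mulr1n ?mulr0n //.
        by rewrite mulfV // gt_eqF.
      by rewrite mulfV // gt_eqF.
    by rewrite eA cjM hd mulmx1 QT.
  have [uA _] := mulmx1_unit h1.
  by rewrite -[LHS]mulmx1 -h1 mulKmx.
have hdel : delta_of A = 2^-1 * `|ln (a 0 i0) - ln (a 0 i1)|.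
  rewrite /delta_of hL tr_conj ?det_conj // !mxE.
  congr (_ * _); rewrite -sqrtr_sqr; congr Num.sqrt; ring.
rewrite /DKlog /rhs /Zmat /= hdel hL hAi.
set Y := Q^T *m X *m Q.
have hX : X = Q *m Y *m Q^T.
  by rewrite /Y !mulmxA QT mul1mx -mulmxA QT mulmx1.
rewrite hX; do 4! rewrite ?cjM ?cjZ ?cjB ?cjD.
congr (_ *m _ *m _).
set k := theta_over _ / 8.
have hF := Flog_theta (a 0 i0) (a 0 i1) a0 a1; rewrite -/k in hF.
rewrite /Dl /Dai; clearbody Y.
have Fxx (z : R) : Flog z z = 2^-1 * (z^-1 + z^-1) by rewrite /Flog eqxx; lra.
apply: mx2_eq; do 4! rewrite ?mxE ?big_ord_recl ?big_ord0 ?addr0 /= ?lift00 ?mulr1n ?mulr0n ?mulr0 ?mul0r ?addr0 ?add0r.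
- by rewrite Fxx; ring.
- by rewrite hF; ring.
- by rewrite Flog_sym hF; ring.
- by rewrite Fxx; ring.
Qed.
Lemma lim_s : (s : R) @[s --> 0^'] --> (0 : R).
Proof. exact: cvg_within. Qed.

Lemma lim_lin (u v : R) : (u + s * v) @[s --> 0^'] --> u.
Proof.
have h : (u + s * v) @[s --> 0^'] --> u + 0 * v.
  apply: cvgD; first exact: cvg_cst.
  by apply: cvgM; [exact: lim_s | exact: cvg_cst].
by rewrite mul0r addr0 in h.
Qed.

Lemma sqrt_cvg {T} {F : set_system T} {FF : Filter F} {u : T -> R} {x} :
  u t @[t --> F] --> x -> (Num.sqrt (u t) : R) @[t --> F] --> (Num.sqrt x : R).
Proof. by move=> hu; apply: cvg_comp hu (@sqrt_continuous R x). Qed.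
Section Diag.
Variables (x0 x1 y00 y01 y11 : R).
Hypothesis hx1 : 0 < x1.
Hypothesis hx : x1 <= x0.

Definition b00 (s : R) := x0 + s * y00.
Definition b11 (s : R) := x1 + s * y11.
Definition b01 (s : R) := s * y01.
Definition cs s := (b00 s + b11 s) / 2.
Definition ps s := (b00 s - b11 s) / 2.
Definition rs s := Num.sqrt (ps s ^+ 2 + b01 s ^+ 2).
Definition e1 s := cs s + rs s.
Definition e2 s := cs s - rs s.
Definition Hs s := Flog (e1 s) (e2 s).
Definition W00 s := (ln (e1 s) + ln (e2 s)) / 2 + Hs s * (b00 s - (e1 s + e2 s) / 2).
Definition W11 s := (ln (e1 s) + ln (e2 s)) / 2 + Hs s * (b11 s - (e1 s + e2 s) / 2).
Definition W01 s := Hs s * b01 s.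

Let p0 := (x0 - x1) / 2.
Let c0 := (x0 + x1) / 2.
Let hx0 : 0 < x0. Proof. exact: lt_le_trans hx1 hx. Qed.
Let hp0 : 0 <= p0. Proof. by rewrite /p0 divr_ge0 // subr_ge0. Qed.

Lemma rs_sq s : rs s ^+ 2 = ps s ^+ 2 + b01 s ^+ 2.
Proof. by rewrite sqr_sqrtr // addr_ge0 // sqr_ge0. Qed.

Lemma rs0 : rs 0 = p0.
Proof.
rewrite /rs /ps /b00 /b11 /b01 !mul0r !addr0 expr0n /= addr0 sqrtr_sqr.
by rewrite ger0_norm.
Qed.

Lemma e10 : e1 0 = x0.
Proof. by rewrite /e1 rs0 /cs /b00 /b11 !mul0r !addr0 /p0; field. Qed.
Lemma e20 : e2 0 = x1.
Proof. by rewrite /e2 rs0 /cs /b00 /b11 !mul0r !addr0 /p0; field. Qed.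

Lemma lim_cs : cs s @[s --> 0^'] --> c0.
Proof.
have -> : cs = fun s => c0 + s * ((y00 + y11) / 2).
  by apply: funext => s; rewrite /cs /b00 /b11 /c0; field.
exact: lim_lin.
Qed.

Lemma lim_ps : ps s @[s --> 0^'] --> p0.
Proof.
have -> : ps = fun s => p0 + s * ((y00 - y11) / 2).
  by apply: funext => s; rewrite /ps /b00 /b11 /p0; field.
exact: lim_lin.
Qed.

Lemma lim_b01 : b01 s @[s --> 0^'] --> 0.
Proof. by have := lim_lin 0 y01; rewrite /b01; under eq_fun do rewrite add0r. Qed.

Lemma lim_rs : rs s @[s --> 0^'] --> p0.
Proof.
have h : (ps s * ps s + b01 s * b01 s) @[s --> 0^'] --> p0 * p0 + 0 * 0.
  by apply: cvgD; apply: cvgM; (exact: lim_ps || exact: lim_b01).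
have e : rs = fun s => (Num.sqrt (ps s * ps s + b01 s * b01 s) : R).
  by apply: funext => s; rewrite /rs !expr2.
have h2 : (Num.sqrt (ps s * ps s + b01 s * b01 s) : R) @[s --> 0^'] -->
    (Num.sqrt (p0 * p0 + 0 * 0) : R) := sqrt_cvg h.
rewrite e; move: h2; rewrite mul0r addr0 -expr2 sqrtr_sqr ger0_norm //.
by move=> H; apply: H; exact: _.
Qed.

Lemma lim_e1 : e1 s @[s --> 0^'] --> x0.
Proof.
have -> : x0 = c0 + p0 by rewrite /c0 /p0; field.
exact: cvgD lim_cs lim_rs.
Qed.

Lemma lim_e2 : e2 s @[s --> 0^'] --> x1.
Proof.
have -> : x1 = c0 - p0 by rewrite /c0 /p0; field.
exact: cvgB lim_cs lim_rs.
Qed.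

Lemma lim_Hs : Hs s @[s --> 0^'] --> Flog x0 x1.
Proof. exact: Flog_cvg hx0 hx1 lim_e1 lim_e2. Qed.

Lemma lim_W01 : ((W01 s - W01 0) / s) @[s --> 0^'] --> Flog x0 x1 * y01.
Proof.
apply: cvg_trans; first apply: (near_eq_cvg (f := fun s => Hs s * y01)).
  near=> s.
  have sn : s != 0 by near: s; exact: nbhs_dnbhs_neq.
  by rewrite /W01 /b01 mul0r mulr0 subr0; field.
by apply: cvgM; [exact: lim_Hs | exact: cvg_cst].
Unshelve. all: by end_near.
Qed.

Definition dt s := b00 s * b11 s - b01 s ^+ 2.

Lemma e12 s : e1 s * e2 s = dt s.
Proof.
have h := rs_sq s.
have -> : e1 s * e2 s = cs s ^+ 2 - rs s ^+ 2 by rewrite /e1 /e2; ring.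
by rewrite h /dt /cs /ps; by field.
Qed.

Lemma lim_dt : dt s @[s --> 0^'] --> x0 * x1.
Proof.
have -> : dt = fun s => x0 * x1 + s * (x0 * y11 + y00 * x1 + s * (y00 * y11 - y01 ^+ 2)).
  by apply: funext => s; rewrite /dt /b00 /b11 /b01; ring.
have h : (x0 * x1 + s * (x0 * y11 + y00 * x1 + s * (y00 * y11 - y01 ^+ 2)))
   @[s --> 0^'] --> x0 * x1 + 0 * (x0 * y11 + y00 * x1 + 0 * (y00 * y11 - y01 ^+ 2)).
  apply: cvgD; first exact: cvg_cst.
  apply: cvgM; first exact: lim_s.
  apply: cvgD; first exact: cvg_cst.
  by apply: cvgM; [exact: lim_s | exact: cvg_cst].
by move: h; rewrite !mul0r addr0.
Qed.

Lemma pos_near : \forall s \near 0^', 0 < e1 s /\ 0 < e2 s.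
Proof.
have h1 := @cvgr_gt R _ _ _ _ _ lim_e1 0 hx0.
have h2 := @cvgr_gt R _ _ _ _ _ lim_e2 0 hx1.
near=> s; split.
  by near: s; exact: h1.
by near: s; exact: h2.
Unshelve. all: by end_near.
Qed.

Lemma W00_eq s : 0 < e1 s -> 0 < e2 s ->
  W00 s = ln (dt s) / 2 + Hs s * ps s.
Proof.
move=> p1 p2; rewrite /W00 -e12 lnM ?posrE //.
by rewrite /e1 /e2 /ps /cs; field.
Qed.

Lemma W11_eq s : 0 < e1 s -> 0 < e2 s ->
  W11 s = ln (dt s) / 2 - Hs s * ps s.
Proof.
move=> p1 p2; rewrite /W11 -e12 lnM ?posrE //.
rewrite -mulrN; by rewrite /e1 /e2 /ps /cs; field.
Qed.

Lemma lim_W00_eq : x0 = x1 ->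
  ((W00 s - W00 0) / s) @[s --> 0^'] --> Flog x0 x0 * y00.
Proof.
move=> exy.
have hd0 : 0 < x0 * x1 by rewrite mulr_gt0.
have W0 : W00 0 = ln (x0 * x1) / 2 + Hs 0 * 0.
  rewrite W00_eq ?e10 ?e20 //; congr (_ / 2 + _); last first.
    by rewrite /ps /b00 /b11 !mul0r !addr0 exy subrr mul0r.
  by rewrite /dt /b00 /b11 /b01 !mul0r !addr0 expr0n /= subr0.
apply: cvg_trans; first apply: (near_eq_cvg (f := fun s =>
  Flog (dt s) (x0 * x1) * (x0 * y11 + y00 * x1 + s * (y00 * y11 - y01 ^+ 2)) / 2
  + Hs s * ((y00 - y11) / 2))).
  near=> s.
  have sn : s != 0 by near: s; exact: nbhs_dnbhs_neq.
  have [q1 q2] : 0 < e1 s /\ 0 < e2 s by near: s; exact: pos_near.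
  rewrite W00_eq // W0 mulr0 addr0.
  have hm := Flog_mul (dt s) (x0 * x1).
  have hdd : dt s - x0 * x1 = s * (x0 * y11 + y00 * x1 + s * (y00 * y11 - y01 ^+ 2)).
    by rewrite /dt /b00 /b11 /b01; ring.
  have hps : ps s = s * ((y00 - y11) / 2).
    by rewrite /ps /b00 /b11 exy; by field.
  rewrite hps.
  have -> : ln (dt s) / 2 + Hs s * (s * ((y00 - y11) / 2)) - ln (x0 * x1) / 2
     = (ln (dt s) - ln (x0 * x1)) / 2 + Hs s * (s * ((y00 - y11) / 2)) by field.
  by rewrite -hm hdd; field.
have -> : Flog x0 x0 * y00 =
  Flog (x0 * x1) (x0 * x1) * (x0 * y11 + y00 * x1 + 0 * (y00 * y11 - y01 ^+ 2)) / 2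
  + Flog x0 x1 * ((y00 - y11) / 2).
  by rewrite -exy /Flog !eqxx mul0r addr0; field; rewrite gt_eqF.
apply: cvgD; last by apply: cvgM; [exact: lim_Hs | exact: cvg_cst].
apply: cvgM; last exact: cvg_cst.
apply: cvgM; first by apply: Flog_cvg; [| | exact: lim_dt | exact: cvg_cst].
apply: cvgD; first exact: cvg_cst.
by apply: cvgM; [exact: lim_s | exact: cvg_cst].
Unshelve. all: by end_near.
Qed.
Lemma lim_W11_eq : x0 = x1 ->
  ((W11 s - W11 0) / s) @[s --> 0^'] --> Flog x1 x1 * y11.
Proof.
move=> exy.
have hd0 : 0 < x0 * x1 by rewrite mulr_gt0.
have W0 : W11 0 = ln (x0 * x1) / 2 - Hs 0 * 0.
  rewrite W11_eq ?e10 ?e20 //; congr (_ / 2 - _); last first.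
    by rewrite /ps /b00 /b11 !mul0r !addr0 exy subrr mul0r.
  by rewrite /dt /b00 /b11 /b01 !mul0r !addr0 expr0n /= subr0.
apply: cvg_trans; first apply: (near_eq_cvg (f := fun s =>
  Flog (dt s) (x0 * x1) * (x0 * y11 + y00 * x1 + s * (y00 * y11 - y01 ^+ 2)) / 2
  - Hs s * ((y00 - y11) / 2))).
  near=> s.
  have sn : s != 0 by near: s; exact: nbhs_dnbhs_neq.
  have [q1 q2] : 0 < e1 s /\ 0 < e2 s by near: s; exact: pos_near.
  rewrite W11_eq // W0 mulr0 subr0.
  have hm := Flog_mul (dt s) (x0 * x1).
  have hdd : dt s - x0 * x1 = s * (x0 * y11 + y00 * x1 + s * (y00 * y11 - y01 ^+ 2)).
    by rewrite /dt /b00 /b11 /b01; ring.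
  have hps : ps s = s * ((y00 - y11) / 2).
    by rewrite /ps /b00 /b11 exy; field.
  rewrite hps.
  have -> : ln (dt s) / 2 - Hs s * (s * ((y00 - y11) / 2)) - ln (x0 * x1) / 2
     = (ln (dt s) - ln (x0 * x1)) / 2 - Hs s * (s * ((y00 - y11) / 2)) by field.
  by rewrite -hm hdd; field.
have -> : Flog x1 x1 * y11 =
  Flog (x0 * x1) (x0 * x1) * (x0 * y11 + y00 * x1 + 0 * (y00 * y11 - y01 ^+ 2)) / 2
  - Flog x0 x1 * ((y00 - y11) / 2).
  by rewrite -exy /Flog !eqxx mul0r addr0; field; rewrite gt_eqF.
apply: cvgB; last by apply: cvgM; [exact: lim_Hs | exact: cvg_cst].
apply: cvgM; last exact: cvg_cst.
apply: cvgM; first by apply: Flog_cvg; [| | exact: lim_dt | exact: cvg_cst].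
apply: cvgD; first exact: cvg_cst.
by apply: cvgM; [exact: lim_s | exact: cvg_cst].
Unshelve. all: by end_near.
Qed.

Lemma W00_alt s : 0 < rs s + ps s ->
  W00 s = ln (e1 s) - Hs s * (b01 s ^+ 2 / (rs s + ps s)).
Proof.
move=> hp.
have h := rs_sq s.
have hb : b01 s ^+ 2 = (rs s - ps s) * (rs s + ps s).
  have -> : (rs s - ps s) * (rs s + ps s) = rs s ^+ 2 - ps s ^+ 2 by ring.
  by rewrite h; ring.
have hl : ln (e1 s) = ln (e2 s) + (e1 s - e2 s) * Hs s by rewrite /Hs Flog_mul; ring.
rewrite hb mulfK ?gt_eqF // /W00 hl /e1 /e2 /ps /cs; by field.
Qed.

Lemma W11_alt s : 0 < rs s + ps s ->
  W11 s = ln (e2 s) + Hs s * (b01 s ^+ 2 / (rs s + ps s)).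
Proof.
move=> hp.
have h := rs_sq s.
have hb : b01 s ^+ 2 = (rs s - ps s) * (rs s + ps s).
  have -> : (rs s - ps s) * (rs s + ps s) = rs s ^+ 2 - ps s ^+ 2 by ring.
  by rewrite h; ring.
have hl : ln (e1 s) = ln (e2 s) + (e1 s - e2 s) * Hs s by rewrite /Hs Flog_mul; ring.
rewrite hb mulfK ?gt_eqF // /W11 hl /e1 /e2 /ps /cs; by field.
Qed.
Lemma ps0 : ps 0 = p0.
Proof. by rewrite /ps /b00 /b11 !mul0r !addr0. Qed.

Lemma lim_W00_ne : x0 != x1 ->
  ((W00 s - W00 0) / s) @[s --> 0^'] --> Flog x0 x0 * y00.
Proof.
move=> ne.
have hp : 0 < p0 by rewrite /p0 divr_gt0 // subr_gt0 lt_def ne hx.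
have h1 := @cvgr_gt R _ _ _ _ _ (cvgD lim_rs lim_ps) 0 (addr_gt0 hp hp).
have h2 := @cvgr_gt R _ _ _ _ _ (cvgD lim_rs (cvg_cst p0)) 0 (addr_gt0 hp hp).
have W0 : W00 0 = ln x0.
  rewrite W00_alt ?rs0 ?ps0 ?addr_gt0 // e10 /b01 mul0r expr0n /= mul0r.
  by rewrite mulr0 subr0.
apply: cvg_trans; first apply: (near_eq_cvg (f := fun s =>
  Flog (e1 s) x0 * ((y00 + y11) / 2 +
     ((y00 - y11) / 2 * (ps s + p0) + s * y01 ^+ 2) / (rs s + p0))
  - Hs s * (s * y01 ^+ 2 / (rs s + ps s)))).
  near=> s.
  have sn : s != 0 by near: s; exact: nbhs_dnbhs_neq.
  have q1 : 0 < rs s + ps s by near: s; exact: h1.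
  have q2 : 0 < rs s + p0 by near: s; exact: h2.
  rewrite W00_alt // W0.
  have hm := Flog_mul (e1 s) x0.
  have hr : rs s - p0 = (rs s ^+ 2 - p0 ^+ 2) / (rs s + p0).
    by field; rewrite gt_eqF.
  rewrite rs_sq in hr.
  have he : e1 s - x0 = s * ((y00 + y11) / 2 +
     ((y00 - y11) / 2 * (ps s + p0) + s * y01 ^+ 2) / (rs s + p0)).
    have -> : e1 s - x0 = (cs s - c0) + (rs s - p0) by rewrite /e1 /c0 /p0; field.
    have hc : cs s - c0 = s * ((y00 + y11) / 2).
      by rewrite /cs /c0 /b00 /b11; field.
    have hq : ps s - p0 = s * ((y00 - y11) / 2).
      by rewrite /ps /p0 /b00 /b11; field.
    have e5 : ps s ^+ 2 + b01 s ^+ 2 - p0 ^+ 2 = (ps s - p0) * (ps s + p0) + b01 s ^+ 2.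
      by ring.
    rewrite e5 hq in hr.
    by rewrite hr hc /b01; field; rewrite gt_eqF.
  have -> : ln (e1 s) - Hs s * (b01 s ^+ 2 / (rs s + ps s)) - ln x0 =
    (e1 s - x0) * Flog (e1 s) x0 - Hs s * (b01 s ^+ 2 / (rs s + ps s)).
    by rewrite hm; ring.
  by rewrite he /b01; field; rewrite ?sn ?gt_eqF.
have -> : Flog x0 x0 * y00 =
  Flog x0 x0 * ((y00 + y11) / 2 +
     ((y00 - y11) / 2 * (p0 + p0) + 0 * y01 ^+ 2) / (p0 + p0))
  - Flog x0 x1 * (0 * y01 ^+ 2 / (p0 + p0)).
  by rewrite !mul0r ?mulr0 ?subr0 ?addr0; field; rewrite ?gt_eqF ?addr_gt0.
apply: cvgB; last first.
  apply: cvgM; first exact: lim_Hs.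
  apply: cvgM; first by apply: cvgM; [exact: lim_s | exact: cvg_cst].
  by apply: cvgV; [rewrite gt_eqF ?addr_gt0 | exact: cvgD lim_rs lim_ps].
apply: cvgM; first by apply: Flog_cvg; [| | exact: lim_e1 | exact: cvg_cst].
apply: cvgD; first exact: cvg_cst.
apply: cvgM; last first.
  by apply: cvgV; [rewrite gt_eqF ?addr_gt0 | exact: cvgD lim_rs (cvg_cst p0)].
apply: cvgD.
  by apply: cvgM; [exact: cvg_cst | exact: cvgD lim_ps (cvg_cst p0)].
by apply: cvgM; [exact: lim_s | exact: cvg_cst].
Unshelve. all: by end_near.
Qed.
Lemma lim_W11_ne : x0 != x1 ->
  ((W11 s - W11 0) / s) @[s --> 0^'] --> Flog x1 x1 * y11.
Proof.
move=> ne.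
have hp : 0 < p0 by rewrite /p0 divr_gt0 // subr_gt0 lt_def ne hx.
have h1 := @cvgr_gt R _ _ _ _ _ (cvgD lim_rs lim_ps) 0 (addr_gt0 hp hp).
have h2 := @cvgr_gt R _ _ _ _ _ (cvgD lim_rs (cvg_cst p0)) 0 (addr_gt0 hp hp).
have W0 : W11 0 = ln x1.
  rewrite W11_alt ?rs0 ?ps0 ?addr_gt0 // e20 /b01 mul0r expr0n /= mul0r.
  by rewrite mulr0 addr0.
apply: cvg_trans; first apply: (near_eq_cvg (f := fun s =>
  Flog (e2 s) x1 * ((y00 + y11) / 2 -
     ((y00 - y11) / 2 * (ps s + p0) + s * y01 ^+ 2) / (rs s + p0))
  + Hs s * (s * y01 ^+ 2 / (rs s + ps s)))).
  near=> s.
  have sn : s != 0 by near: s; exact: nbhs_dnbhs_neq.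
  have q1 : 0 < rs s + ps s by near: s; exact: h1.
  have q2 : 0 < rs s + p0 by near: s; exact: h2.
  rewrite W11_alt // W0.
  have hm := Flog_mul (e2 s) x1.
  have hr : rs s - p0 = (rs s ^+ 2 - p0 ^+ 2) / (rs s + p0).
    by field; rewrite gt_eqF.
  rewrite rs_sq in hr.
  have he : e2 s - x1 = s * ((y00 + y11) / 2 -
     ((y00 - y11) / 2 * (ps s + p0) + s * y01 ^+ 2) / (rs s + p0)).
    have -> : e2 s - x1 = (cs s - c0) - (rs s - p0) by rewrite /e2 /c0 /p0; field.
    have hc : cs s - c0 = s * ((y00 + y11) / 2).
      by rewrite /cs /c0 /b00 /b11; field.
    have hq : ps s - p0 = s * ((y00 - y11) / 2).
      by rewrite /ps /p0 /b00 /b11; field.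
    have e5 : ps s ^+ 2 + b01 s ^+ 2 - p0 ^+ 2 = (ps s - p0) * (ps s + p0) + b01 s ^+ 2.
      by ring.
    rewrite e5 hq in hr.
    by rewrite hr hc /b01; field; rewrite gt_eqF.
  have -> : ln (e2 s) + Hs s * (b01 s ^+ 2 / (rs s + ps s)) - ln x1 =
    (e2 s - x1) * Flog (e2 s) x1 + Hs s * (b01 s ^+ 2 / (rs s + ps s)).
    by rewrite hm; ring.
  by rewrite he /b01; field; rewrite ?sn ?gt_eqF.
have -> : Flog x1 x1 * y11 =
  Flog x1 x1 * ((y00 + y11) / 2 -
     ((y00 - y11) / 2 * (p0 + p0) + 0 * y01 ^+ 2) / (p0 + p0))
  + Flog x0 x1 * (0 * y01 ^+ 2 / (p0 + p0)).
  by rewrite !mul0r ?mulr0 ?subr0 ?addr0; field; rewrite ?gt_eqF ?addr_gt0.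
apply: cvgD; last first.
  apply: cvgM; first exact: lim_Hs.
  apply: cvgM; first by apply: cvgM; [exact: lim_s | exact: cvg_cst].
  by apply: cvgV; [rewrite gt_eqF ?addr_gt0 | exact: cvgD lim_rs lim_ps].
apply: cvgM; first by apply: Flog_cvg; [| | exact: lim_e2 | exact: cvg_cst].
apply: cvgB; first exact: cvg_cst.
apply: cvgM; last first.
  by apply: cvgV; [rewrite gt_eqF ?addr_gt0 | exact: cvgD lim_rs (cvg_cst p0)].
apply: cvgD.
  by apply: cvgM; [exact: cvg_cst | exact: cvgD lim_ps (cvg_cst p0)].
by apply: cvgM; [exact: lim_s | exact: cvg_cst].
Unshelve. all: by end_near.
Qed.

Lemma lim_W00 : ((W00 s - W00 0) / s) @[s --> 0^'] --> Flog x0 x0 * y00.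
Proof. by case: (eqVneq x0 x1) => [e|n]; [exact: lim_W00_eq | exact: lim_W00_ne]. Qed.
Lemma lim_W11 : ((W11 s - W11 0) / s) @[s --> 0^'] --> Flog x1 x1 * y11.
Proof. by case: (eqVneq x0 x1) => [e|n]; [exact: lim_W11_eq | exact: lim_W11_ne]. Qed.
End Diag.
Lemma mxlog_sym {B} : B i0 i1 = B i1 i0 ->
  mxlog B = G B ((B i0 i0 + B i1 i1) / 2 +
       Num.sqrt (((B i0 i0 - B i1 i1) / 2) ^+ 2 + B i0 i1 ^+ 2))
     ((B i0 i0 + B i1 i1) / 2 -
       Num.sqrt (((B i0 i0 - B i1 i1) / 2) ^+ 2 + B i0 i1 ^+ 2)).
Proof.
move=> hs; have [P [e [hP [eB [e0 e1]]]]] := spectral2 hs.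
by rewrite (mxlog_dec hP eB) (conj_interp hP eB) e0 e1.
Qed.

Lemma G_entry M x y k l : G M x y k l =
  (ln x + ln y) / 2 * (k == l)%:R + Flog x y * (M k l - (x + y) / 2 * (k == l)%:R).
Proof. by rewrite /G !mxE. Qed.

Lemma mxlog_conj Q B : is_orth Q -> B i0 i1 = B i1 i0 ->
  mxlog (Q *m B *m Q^T) = Q *m mxlog B *m Q^T.
Proof.
move=> hQ hs; have [P [e [hP [eB _]]]] := spectral2 hs.
have hQP : is_orth (Q *m P).
  rewrite /is_orth trmx_mul -mulmxA (mulmxA Q^T) (hQ : Q^T *m Q = 1%:M) mul1mx.
  exact: hP.
have eQB : Q *m B *m Q^T = (Q *m P) *m diag_mx e *m (Q *m P)^T.
  by rewrite eB trmx_mul !mulmxA.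
by rewrite (mxlog_dec hQP eQB) (mxlog_dec hP eB) trmx_mul !mulmxA.
Qed.

Lemma conj_cvg Q (D : R -> 'M[R]_2) (E : 'M[R]_2) i j :
  (forall k l, (D s k l) @[s --> 0^'] --> E k l) ->
  ((Q *m D s *m Q^T) i j) @[s --> 0^'] --> (Q *m E *m Q^T) i j.
Proof.
move=> h; rewrite conj_entry.
apply: cvg_trans; first apply: (near_eq_cvg (f := fun s =>
  (Q i i0 * D s i0 i0 + Q i i1 * D s i1 i0) * Q j i0 +
  (Q i i0 * D s i0 i1 + Q i i1 * D s i1 i1) * Q j i1)).
  by near=> s; rewrite conj_entry.
by apply: cvgD; apply: cvgM; try exact: cvg_cst; apply: cvgD; apply: cvgM;
  try exact: cvg_cst; exact: h.
Unshelve. all: by end_near.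
Qed.
Lemma part2 A X : spd A -> X^T = X -> forall i j : 'I_2,
  (fun s : R => (mxlog (A + s *: X) - mxlog A) i j / s) @ 0^' --> rhs A X i j.
Proof.
move=> hA hX i j.
have Asym : A i0 i1 = A i1 i0.
  by have := congr1 (fun M : 'M[R]_2 => M i1 i0) hA.1; rewrite mxE.
have [Q [a [hQ [eA [ea0 ea1]]]]] := spectral2 Asym.
have [a0 a1] := spd_eig hA hQ eA.
have hle : a 0 i1 <= a 0 i0 by rewrite ea0 ea1 lerD2l ge0_cp ?sqrtr_ge0.
have QT := orthT hQ.
set Y := Q^T *m X *m Q.
have eX : X = Q *m Y *m Q^T.
  by rewrite /Y !mulmxA QT mul1mx -mulmxA QT mulmx1.
have Ysym : Y i0 i1 = Y i1 i0.
  have : Y^T = Y by rewrite /Y !trmx_mul trmxK hX mulmxA.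
  by move/(congr1 (fun M : 'M[R]_2 => M i1 i0)); rewrite mxE.
have hY : Q^T *m X *m Q = Y by [].
clearbody Y.
pose B (s : R) := diag_mx a + s *: Y.
have Bsym s : B s i0 i1 = B s i1 i0 by rewrite !mxE /= Ysym.
have eAs s : A + s *: X = Q *m B s *m Q^T.
  by rewrite /B mulmxDr mulmxDl -eA eX -scalemxAr -scalemxAl.
have eA0 : A = Q *m B 0 *m Q^T by rewrite -eAs scale0r addr0.
set x0 := a 0 i0; set x1 := a 0 i1.
set y00 := Y i0 i0; set y01 := Y i0 i1; set y11 := Y i1 i1.
have hW s : mxlog (B s) = mk2 (W00 x0 x1 y00 y01 y11 s) (W01 x0 x1 y00 y01 y11 s)
   (W01 x0 x1 y00 y01 y11 s) (W11 x0 x1 y00 y01 y11 s).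
  have B00 : B s i0 i0 = b00 x0 y00 s by rewrite !mxE /= mulr1n.
  have B11 : B s i1 i1 = b11 x1 y11 s by rewrite !mxE /= mulr1n.
  have B01 : B s i0 i1 = b01 y01 s by rewrite !mxE /= mulr0n add0r.
  have B10 : B s i1 i0 = b01 y01 s by rewrite -Bsym.
  rewrite (mxlog_sym (Bsym s)) B00 B11 B01.
  apply: mx2_eq; rewrite !G_entry /= ?B00 ?B11 ?B01 ?B10 ?mk2E.
  - by rewrite /W00 /Hs /e1 /e2 /rs /cs /ps mulr1n !mulr1.
  - by rewrite /W01 /Hs /e1 /e2 /rs /cs /ps mulr0n !mulr0 subr0 add0r.
  - by rewrite /W01 /Hs /e1 /e2 /rs /cs /ps mulr0n !mulr0 subr0 add0r.
  - by rewrite /W11 /Hs /e1 /e2 /rs /cs /ps mulr1n !mulr1.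
pose D (s : R) := s^-1 *: (mxlog (B s) - mxlog (B 0)).
pose Fm := \matrix_(k, l) (Flog (a 0 k) (a 0 l) * Y k l).
have -> : rhs A X i j = (Q *m Fm *m Q^T) i j.
  by rewrite -(@part1 A X Q a hA hQ eA) /DKlog hY.
apply: cvg_trans; first apply: (near_eq_cvg (f := fun s => (Q *m D s *m Q^T) i j)).
  near=> s.
  rewrite eAs eA0 !mxlog_conj // -mulmxBl -mulmxBr /D -scalemxAr -scalemxAl.
  by rewrite [in LHS]mxE mulrC.
apply: conj_cvg => k l.
have hD s : D s k l = (mxlog (B s) k l - mxlog (B 0) k l) / s.
  by rewrite /D !mxE mulrC.
under eq_fun do rewrite hD.
rewrite /Fm mxE.
case: (ord2_cases k) => ->; case: (ord2_cases l) => ->; under eq_fun do rewrite !hW !mk2E;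
  rewrite ?hW ?mk2E.
- exact: lim_W00.
- exact: lim_W01.
- by rewrite Flog_sym -Ysym; exact: lim_W01.
- exact: lim_W11.
Unshelve. all: by end_near.
Qed.
End Main.

Theorem mainTheorem9 (R : realType) (A X : 'M[R]_2) :
  spd A ->
  (forall (Q : 'M[R]_2) (a : 'rV[R]_2),
      is_orth Q -> A = Q *m diag_mx a *m Q^T ->
      DKlog Q a X = rhs A X) /\
  (X^T = X -> forall i j : 'I_2,
      (fun s : R => (mxlog (A + s *: X) - mxlog A) i j / s) @ 0^' --> rhs A X i j).
Proof.
move=> hA; split.
  by move=> Q a hQ eA; exact: (@part1 R A X Q a hA hQ eA).
by move=> hX; exact: (@part2 R A X hA hX).
Qed.
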